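(* The set of properties consisting of $EV$ (the even permutations) and $EL$ (the permutations of even length) is query-complete.
   Context: For $\sigma\in S_m$ and nonempty permutations $\alpha_1,\dots,\alpha_m$, the inflation $\sigma[\alpha_1,\dots,\alpha_m]$ is the permutation obtained by replacing each entry $\sigma(i)$ by an interval (contiguous positions, consecutive values) order-isomorphic to $\alpha_i$. A property is any set of permutations. A set $\mathcal{P}$ of properties is query-complete if for every permutation $\sigma\in S_m$ and every $P\in\mathcal{P}$, whether $\sigma[\alpha_1,\dots,\alpha_m]\in P$ is determined by $\sigma$ together with the knowledge, for each $i\in[m]$ and each $Q\in\mathcal{P}$, of whether $\alpha_i\in Q$. *)

(* Defs.v *)
From mathcomp Require Import all_boot all_fingroup.
Set Implicit Arguments. Unset Strict Implicit. Unset Printing Implicit Defensive.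

(* Permutations are written in one-line notation, 0-based: a permutation of
   length n is a list s of naturals that is a rearrangement of 0,...,n-1. *)
Definition is_perm (s : seq nat) : bool := perm_eq s (iota 0 (size s)).

Definition property := seq nat -> bool.

(* The mathcomp permutation of 'I_(size s) with one-line notation s
   (meaningful when is_perm s). *)
Definition perm_of_seq (s : seq nat) : {perm 'I_(size s)} :=
  insubd (1%g : {perm 'I_(size s)})
    [ffun i : 'I_(size s) => (insubd i (nth 0 s i) : 'I_(size s))].

Definition EV : property := fun s => ~~ odd_perm (perm_of_seq s).

Definition EL : property := fun s => ~~ odd (size s).

(* Inflation sigma[alpha_0, ..., alpha_(m-1)]: the block for position i is
   alpha_i shifted by the total size of the alpha_j with sigma(j) < sigma(i). *)
Definition infl_offset (sigma : seq nat) (alphas : seq (seq nat)) (i : nat) : nat :=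
  sumn [seq size (nth [::] alphas j) |
         j <- iota 0 (size sigma) & nth 0 sigma j < nth 0 sigma i].

Definition inflate (sigma : seq nat) (alphas : seq (seq nat)) : seq nat :=
  flatten [seq [seq x + infl_offset sigma alphas i | x <- nth [::] alphas i]
          | i <- iota 0 (size sigma)].

Definition query_complete (Ps : property -> Prop) : Prop :=
  forall (sigma : seq nat) (alphas betas : seq (seq nat)),
    is_perm sigma ->
    size alphas = size sigma -> size betas = size sigma ->
    (forall i, i < size sigma ->
       is_perm (nth [::] alphas i) /\ 0 < size (nth [::] alphas i) /\
       is_perm (nth [::] betas i) /\ 0 < size (nth [::] betas i)) ->
    (forall i, i < size sigma -> forall Q, Ps Q ->
       Q (nth [::] alphas i) = Q (nth [::] betas i)) ->
    forall P, Ps P -> P (inflate sigma alphas) = P (inflate sigma betas).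

(* Main.v *)
Require Import Defs.
From mathcomp Require Import all_boot all_fingroup zify.
Set Implicit Arguments. Unset Strict Implicit. Unset Printing Implicit Defensive.

Fixpoint inv (s : seq nat) : nat :=
  if s is x :: s' then count (fun y => y < x) s' + inv s' else 0.

Lemma inv_map (f : nat -> nat) s :
  {in s &, forall y z, (f y < f z) = (y < z)} -> inv (map f s) = inv s.
Proof.
elim: s => //= x s IH H.
rewrite IH; last by move=> y z Hy Hz; apply: H; rewrite inE ?Hy ?Hz orbT.
congr (_ + _); rewrite count_map; apply: eq_in_count => y Hy /=.
by apply: H; rewrite inE ?Hy ?eqxx ?orbT.
Qed.

Lemma count_lt_iota x N : x <= N -> count (fun y => y < x) (iota 0 N) = x.
Proof.
move=> H; rewrite -(subnKC H) iotaD count_cat.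
rewrite (@eq_in_count _ _ predT (iota 0 x)); last by move=> y; rewrite mem_iota.
rewrite (@eq_in_count _ _ pred0 (iota (0 + x) _)); last first.
  by move=> y; rewrite mem_iota /= => /andP [H1 _]; rewrite ltnNge H1.
by rewrite count_predT count_pred0 size_iota addn0.
Qed.

Lemma unbump_mono x y z : y != x -> z != x ->
  (unbump x y < unbump x z) = (y < z).
Proof.
rewrite /unbump => Hy Hz.
case: (ltngtP x y) => H1; case: (ltngtP x z) => H2 /=;
  apply/idP/idP => ?; lia.
Qed.

Lemma perm_inv_odd n : forall s (p : 'S_n), size s = n ->
  (forall i : 'I_n, nth 0 s i = p i) -> odd_perm p = odd (inv s).
Proof.
elim: n => [|n IH] s p Hs Hp.
  by move/size0nil: Hs => ->; rewrite (permS0 p) odd_perm1.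
case: s Hs Hp => // x s' [Hs] Hp.
pose j0 := p ord0.
have Hx : x = j0 by have := Hp ord0.
have Hneq k : p (lift ord0 k) != j0.
  by rewrite /j0 (inj_eq perm_inj) eq_sym neq_lift.
pose f (k : 'I_n) := odflt k (unlift j0 (p (lift ord0 k))).
have Hf k : lift j0 (f k) = p (lift ord0 k).
  rewrite /f; case: (unliftP j0 (p (lift ord0 k))) => [u|] /= E; first by rewrite E.
  by move: (Hneq k); rewrite -E eqxx.
have finj : injective f.
  move=> a b E; apply: (@lift_inj _ ord0); apply: (@perm_inj _ p).
  by rewrite -!Hf E.
pose q := perm finj.
have Hpq : p = lift_perm ord0 j0 q.
  apply/permP => i; case: (unliftP ord0 i) => [k|] ->.
    by rewrite lift_perm_lift permE Hf.
  by rewrite lift_perm_id.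
have Hnth k (Hk : k < n) : nth 0 s' k = p (lift ord0 (Ordinal Hk)).
  by rewrite -Hp lift0.
have Hnotin : x \notin s'.
  apply/negP => /(nthP 0) [k Hk E].
  rewrite Hs in Hk; move: (Hnth k Hk); rewrite E Hx => /val_inj /perm_inj E'.
  by have := neq_lift ord0 (Ordinal Hk); rewrite -E' eqxx.
have Hq : odd_perm q = odd (inv (map (unbump x) s')).
  apply: IH; first by rewrite size_map.
  move=> k; rewrite (nth_map 0) ?Hs // permE.
  rewrite (Hnth k (ltn_ord k)) -(bumpK j0 (f k)) Hx.
  have -> : Ordinal (ltn_ord k) = k by apply: val_inj.
  by rewrite -Hf.
rewrite Hpq odd_lift_perm Hq /=.
rewrite inv_map; last first.
  move=> y z Hy Hz; apply: unbump_mono; apply/eqP => E; move: Hnotin; rewrite -E; [by rewrite Hy | by rewrite Hz].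
have -> : count (fun y => y < x) s' = x.
  have Hperm : perm_eq (x :: s') (iota 0 n.+1).
    have -> : x :: s' = [seq val (p i) | i <- enum 'I_n.+1].
      apply: (@eq_from_nth _ 0); first by rewrite size_map size_enum_ord /= Hs.
      move=> i; rewrite /= Hs => Hi.
      rewrite (nth_map ord0) ?size_enum_ord // -Hp.
      by rewrite -(nth_map ord0 0 val) ?size_enum_ord // val_enum_ord nth_iota.
    rewrite -val_enum_ord map_comp; apply: perm_map.
    apply: uniq_perm; [by rewrite (map_inj_uniq perm_inj) enum_uniq | exact: enum_uniq |].
    move=> i; rewrite mem_enum; apply/mapP; exists ((p^-1)%g i); first by rewrite mem_enum.
    by rewrite permKV.
  move/seq.permP: Hperm => Hperm; move: (Hperm (fun y => y < x)); rewrite count_lt_iota; last by rewrite Hx ltnW.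
  by rewrite /= ltnn add0n.
by rewrite oddD Hx.
Qed.

Lemma perm_of_seqE s : is_perm s -> forall i : 'I_(size s), nth 0 s i = perm_of_seq s i.
Proof.
move=> Hs i.
have Hu : uniq s by rewrite (perm_uniq Hs) iota_uniq.
have Hlt j : j < size s -> nth 0 s j < size s.
  by move=> Hj; move: (mem_nth 0 Hj); rewrite (perm_mem Hs) mem_iota.
have Hinj : injectiveb [ffun i : 'I_(size s) => (insubd i (nth 0 s i) : 'I_(size s))].
  apply/injectiveP => a b; rewrite !ffunE => /(congr1 val); rewrite !val_insubd !Hlt //.
  by move/eqP; rewrite nth_uniq // => /eqP; apply: val_inj.
by rewrite /perm_of_seq -pvalE /= val_insubd Hinj ffunE val_insubd Hlt.
Qed.

Lemma EV_inv s : is_perm s -> EV s = ~~ odd (inv s).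
Proof.
by move=> Hs; rewrite /EV (perm_inv_odd (erefl _) (perm_of_seqE Hs)).
Qed.

Definition cross (a b : seq nat) := sumn [seq count (fun y => y < x) b | x <- a].

Lemma inv_cat a b : inv (a ++ b) = inv a + inv b + cross a b.
Proof.
elim: a => //= [|x a IH]; first by rewrite addn0.
rewrite IH count_cat /cross /=; lia.
Qed.

Lemma cross_catr a b c : cross a (b ++ c) = cross a b + cross a c.
Proof.
elim: a => //= x a IH; rewrite /cross /= count_cat.
rewrite /cross in IH; rewrite IH; lia.
Qed.

Lemma cross_flatten a (B : nat -> seq nat) l :
  cross a (flatten (map B l)) = sumn [seq cross a (B j) | j <- l].
Proof.
elim: l => /= [|j l IH]; first by elim: a => //= x a; rewrite /cross /=.
by rewrite cross_catr IH.
Qed.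

Lemma cross_all a b : (forall x y, x \in a -> y \in b -> y < x) ->
  cross a b = size a * size b.
Proof.
elim: a => //= x a IH H; rewrite /cross /= in IH *.
rewrite IH; last by move=> u v Hu Hv; apply: H; rewrite ?inE ?Hu ?orbT.
rewrite (@eq_in_count _ _ predT); first by rewrite count_predT mulSn.
by move=> y Hy; apply: H; rewrite ?inE ?eqxx.
Qed.

Lemma cross_none a b : (forall x y, x \in a -> y \in b -> x <= y) ->
  cross a b = 0.
Proof.
elim: a => //= x a IH H; rewrite /cross /= in IH *.
rewrite IH; last by move=> u v Hu Hv; apply: H; rewrite ?inE ?Hu ?orbT.
rewrite (@eq_in_count _ _ pred0); first by rewrite count_pred0.
by move=> y Hy /=; rewrite ltnNge H ?inE ?eqxx.
Qed.

Lemma odd_sumn_eq (f g : nat -> nat) l : {in l, forall i, odd (f i) = odd (g i)} ->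
  odd (sumn (map f l)) = odd (sumn (map g l)).
Proof.
elim: l => //= i l IH H; rewrite !oddD H ?mem_head // IH //.
by move=> j Hj; apply: H; rewrite inE Hj orbT.
Qed.

Lemma parity_flatten (Ba Bb : nat -> seq nat) l : uniq l ->
  {in l, forall i, odd (inv (Ba i)) = odd (inv (Bb i))} ->
  {in l &, forall i j, i != j -> odd (cross (Ba i) (Ba j)) = odd (cross (Bb i) (Bb j))} ->
  odd (inv (flatten (map Ba l))) = odd (inv (flatten (map Bb l))).
Proof.
elim: l => //= i l IH /andP [Hi Hu] H1 H2.
rewrite !inv_cat !cross_flatten !oddD H1 ?mem_head // IH //; first last.
- by move=> j k Hj Hk; apply: H2; rewrite inE ?Hj ?Hk orbT.
- by move=> j Hj; apply: H1; rewrite inE Hj orbT.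
congr (_ (+) _); apply: odd_sumn_eq => j Hj; apply: H2; rewrite ?inE ?eqxx ?Hj ?orbT //.
by apply/eqP => E; move: Hi; rewrite E Hj.
Qed.

Lemma uniq_flatten_blocks (B : nat -> seq nat) l : uniq l ->
  {in l, forall i, uniq (B i)} ->
  {in l &, forall i j, i != j -> forall x, x \in B i -> x \notin B j} ->
  uniq (flatten (map B l)).
Proof.
elim: l => //= i l IH /andP [Hi Hu] H1 H2.
rewrite cat_uniq H1 ?mem_head // IH //; first last.
- by move=> j k Hj Hk; apply: H2; rewrite inE ?Hj ?Hk orbT.
- by move=> j Hj; apply: H1; rewrite inE Hj orbT.
rewrite andbT; apply/hasPn => x /flattenP [b /mapP [j Hj ->] Hx].
have Hij : j != i by apply/eqP => E; move: Hi; rewrite -E Hj.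
by apply: (H2 j i) => //; rewrite inE ?Hj ?eqxx ?orbT.
Qed.

Lemma sub_sumn (f : nat -> nat) (P Q : pred nat) r : (forall j, P j -> Q j) ->
  sumn [seq f j | j <- r & P j] <= sumn [seq f j | j <- r & Q j].
Proof.
move=> H; elim: r => //= a r IH.
case: (boolP (P a)) => Pa; first by rewrite (H _ Pa) /= leq_add2l.
by case: (Q a) => //=; apply: leq_trans IH _; apply: leq_addl.
Qed.

Lemma sum_sub (f : nat -> nat) (P Q : pred nat) r i : uniq r -> i \in r -> Q i -> ~~ P i ->
  (forall j, P j -> Q j) ->
  sumn [seq f j | j <- r & P j] + f i <= sumn [seq f j | j <- r & Q j].
Proof.
move=> + + Qi Pi H; elim: r => //= a r IH /andP [Ha Hu].
rewrite inE; case: (eqVneq i a) => [<- _ | Hia /= Hi].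
  rewrite (negbTE Pi) Qi /= addnC leq_add2l; exact: sub_sumn.
have := IH Hu Hi.
case: (boolP (P a)) => Pa; first by rewrite (H _ Pa) /= -addnA leq_add2l.
case: (Q a) => //= Hle; apply: leq_trans Hle _; apply: leq_addl.
Qed.

Section Blocks.
Variables (sigma : seq nat) (alphas : seq (seq nat)).
Hypothesis Hsig : is_perm sigma.
Hypothesis Hal : forall i, i < size sigma -> is_perm (nth [::] alphas i).

Local Notation m := (size sigma).
Local Notation n i := (size (nth [::] alphas i)).
Local Notation off i := (infl_offset sigma alphas i).

Definition blk i := [seq x + off i | x <- nth [::] alphas i].
Definition Ntot := sumn [seq n j | j <- iota 0 m].

Lemma inflateE : inflate sigma alphas = flatten [seq blk i | i <- iota 0 m].
Proof. by []. Qed.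

Lemma size_inflate : size (inflate sigma alphas) = Ntot.
Proof.
rewrite inflateE size_flatten /shape -map_comp /Ntot; congr sumn.
by apply: eq_map => i /=; rewrite size_map.
Qed.

Lemma blk_range i x : i < m -> x \in blk i -> off i <= x < off i + n i.
Proof.
move=> Hi /mapP [y Hy ->]; move: Hy; rewrite (perm_mem (Hal Hi)) mem_iota /=.
lia.
Qed.

Lemma off_lt i j : i < m -> j < m -> nth 0 sigma i < nth 0 sigma j -> off i + n i <= off j.
Proof.
move=> Hi Hj Hij; rewrite /infl_offset.
apply: (sum_sub (fun k => n k) (P := fun k => nth 0 sigma k < nth 0 sigma i)
          (Q := fun k => nth 0 sigma k < nth 0 sigma j)).
- exact: iota_uniq.
- by rewrite mem_iota.
- exact: Hij.
- by rewrite /= ltnn.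
- by move=> k /= Hk; apply: ltn_trans Hk Hij.
Qed.

Lemma off_N i : i < m -> off i + n i <= Ntot.
Proof.
move=> Hi; rewrite /infl_offset /Ntot.
have -> : sumn [seq n k | k <- iota 0 m] = sumn [seq n k | k <- iota 0 m & true]
  by elim: (iota 0 m) => //= a r ->.
apply: (sum_sub (fun k => n k) (P := fun k => nth 0 sigma k < nth 0 sigma i)
          (Q := fun _ => true)) => //.
- exact: iota_uniq.
- by rewrite mem_iota.
- by rewrite /= ltnn.
Qed.

Lemma sig_neq i j : i < m -> j < m -> i != j -> nth 0 sigma i != nth 0 sigma j.
Proof.
move=> Hi Hj; rewrite nth_uniq //; by rewrite (perm_uniq Hsig) iota_uniq.
Qed.

Lemma cross_blk i j : i < m -> j < m -> i != j ->
  cross (blk i) (blk j) = if nth 0 sigma j < nth 0 sigma i then n i * n j else 0.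
Proof.
move=> Hi Hj Hij; case: ifP => H.
  rewrite cross_all ?size_map //.
  move=> x y Hx Hy; have := blk_range Hi Hx; have := blk_range Hj Hy.
  have := off_lt Hj Hi H; lia.
apply: cross_none => x y Hx Hy.
have H' : nth 0 sigma i < nth 0 sigma j.
  have := sig_neq Hi Hj Hij; move: H; case: (ltngtP (nth 0 sigma j) (nth 0 sigma i)) => //.
have := blk_range Hi Hx; have := blk_range Hj Hy; have := off_lt Hi Hj H'; lia.
Qed.

Lemma inflate_perm : is_perm (inflate sigma alphas).
Proof.
have Hu : uniq (inflate sigma alphas).
  rewrite inflateE; apply: uniq_flatten_blocks; first exact: iota_uniq.
    move=> i; rewrite mem_iota /= => Hi; rewrite map_inj_uniq; last exact: addIn.
    by rewrite (perm_uniq (Hal Hi)) iota_uniq.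
  move=> i j; rewrite !mem_iota /= => Hi Hj Hij x Hx; apply/negP => Hx'.
  have := blk_range Hi Hx; have := blk_range Hj Hx'.
  have := sig_neq Hi Hj Hij.
  case: (ltngtP (nth 0 sigma i) (nth 0 sigma j)) => // H _.
    by have := off_lt Hi Hj H; lia.
  by have := off_lt Hj Hi H; lia.
have Hsub : {subset inflate sigma alphas <= iota 0 (size (inflate sigma alphas))}.
  move=> x; rewrite inflateE => /flattenP [b /mapP [i Hi ->] Hx].
  rewrite mem_iota in Hi; rewrite -inflateE size_inflate mem_iota /=.
  have := blk_range Hi Hx; have := off_N Hi; lia.
have Hle : size (iota 0 (size (inflate sigma alphas))) <= size (inflate sigma alphas)
  by rewrite size_iota.
have [_ Heq] := uniq_min_size Hu Hsub Hle.
by rewrite /is_perm; apply: uniq_perm => //; exact: iota_uniq.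
Qed.

End Blocks.

Theorem lemma4p3 : query_complete (fun P => P = EV \/ P = EL).
Proof.
move=> sigma alphas betas Hsig Hsa Hsb Hab Hq P HP.
have HEV i : i < size sigma -> EV (nth [::] alphas i) = EV (nth [::] betas i).
  by move=> Hi; apply: Hq => //; left.
have HEL i : i < size sigma -> odd (size (nth [::] alphas i)) = odd (size (nth [::] betas i)).
  by move=> Hi; apply: negb_inj; apply: (Hq i Hi EL); right.
have Ha i : i < size sigma -> is_perm (nth [::] alphas i) by move=> Hi; case: (Hab i Hi).
have Hb i : i < size sigma -> is_perm (nth [::] betas i) by move=> Hi; case: (Hab i Hi) => _ [_ []].
case: HP => ->.
  rewrite !EV_inv; try exact: inflate_perm.
  congr negb; rewrite !inflateE; apply: parity_flatten; first exact: iota_uniq.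
    move=> i; rewrite mem_iota /= => Hi.
    rewrite !inv_map; try by move=> y z _ _; rewrite ltn_add2r.
    by move: (HEV i Hi); rewrite !EV_inv ?Ha ?Hb //; move/negb_inj.
  move=> i j; rewrite !mem_iota /= => Hi Hj Hij.
  rewrite !cross_blk //; case: ifP => // _.
  by rewrite !oddM HEL ?(HEL j).
rewrite /EL !size_inflate /Ntot; congr negb.
by apply: odd_sumn_eq => i; rewrite mem_iota /= => Hi; apply: HEL.
Qed.
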